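(* Let $(\lambda,\vartheta,\zeta_0)$ be fluid model data as in the context, let $\zeta(\cdot)$ be a measure valued fluid model solution with total mass $z(\cdot)$, and let $t_0>0$. Define $z(t_0,t)=z(t_0+t)$ and $S(t_0,u,v)=\int_u^v z(t_0,r)^{-1}dr$. Then for all $t\ge0$, $$z(t_0,t)=\zeta(t_0)\big([S(t_0,0,t),\infty]\times[t,\infty]\big)+\lambda\int_0^t\mathbf P\big(B\ge S(t_0,s,t);\,D\ge t-s\big)ds.$$
   Context: $\overline{\mathbb R}_+=[0,\infty]$; $\mathbf M_1$ the finite nonnegative Borel measures on $\overline{\mathbb R}_+^2$ with the weak topology. Fluid model data: $\lambda>0$; $\vartheta$ a Borel probability measure on $\overline{\mathbb R}_+^2$ with $\vartheta(\{0\}\times\overline{\mathbb R}_+)=\vartheta(\overline{\mathbb R}_+\times\{0\})=\vartheta(\{(\infty,\infty)\})=0$, $(B,D)$ a random pair with law $\vartheta$, $\rho=\lambda\mathbf E[B]>1$; $\zeta_0\in\mathbf M_1$ with marginals free of atoms in $[0,\infty)$. Corner sets $\mathcal C=\{[x,\infty)\times[y,\infty):x,y\in[0,\infty)\}\cup\{[x,\infty]\times[y,\infty]:x,y\in\overline{\mathbb R}_+\}$. A measure valued fluid model solution is a continuous $\zeta:[0,\infty)\to\mathbf M_1$ with total mass $z(t)=\zeta(t)(\overline{\mathbb R}_+^2)$, $S(u,v)=\int_u^vz(s)^{-1}ds$, such that $\inf_{t>a}z(t)>0$ for all $a>0$ and $\zeta(t)(C)=\zeta_0(C+(S(0,t),t))+\lambda\int_0^t\vartheta(C+(S(s,t),t-s))ds$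 for all $C\in\mathcal C$, $t\ge0$ ($A+w=\{a+w:a\in A\}$). *)

(* Defs.v *)
From HB Require Import structures.
From mathcomp Require Import all_boot all_order all_algebra.
From mathcomp Require Import all_classical all_reals all_analysis.
From mathcomp Require Import measurable_realfun.
Set Implicit Arguments. Unset Strict Implicit. Unset Printing Implicit Defensive.
Import Order.TTheory GRing.Theory Num.Theory.
Import numFieldNormedType.Exports.
Local Open Scope classical_set_scope.
Local Open Scope ring_scope.

Notation pt R := ((\bar R) * (\bar R))%type.

Section Defs.
Variable R : realType.

Definition Rp2 : set (pt R) := [set p | (0 <= p.1)%E /\ (0 <= p.2)%E].

Definition shift (A : set (pt R)) (w : pt R) : set (pt R) :=
  [set ((a.1 + w.1)%E, (a.2 + w.2)%E) | a in A].

Definition closed_corner (x y : \bar R) : set (pt R) :=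
  [set p | (x <= p.1)%E /\ (y <= p.2)%E].

Definition open_corner (x y : R) : set (pt R) :=
  [set p | (x%:E <= p.1 < +oo)%E /\ (y%:E <= p.2 < +oo)%E].

Definition corner_sets : set (set (pt R)) :=
  [set C | (exists x y : R, 0 <= x /\ 0 <= y /\ C = open_corner x y)
        \/ (exists x y : \bar R, (0 <= x)%E /\ (0 <= y)%E /\ C = closed_corner x y)].

Definition einv (r : R) : \bar R := if r == 0 then +oo%E else (r^-1)%:E.

Definition Sint (z : R -> R) (u v : R) : \bar R :=
  (\int[lebesgue_measure]_(s in `[u, v]%classic) einv (z s))%E.

Definition mass (zeta : R -> {finite_measure set (pt R) -> \bar R}) (t : R) : R :=
  fine (zeta t Rp2).

(** continuity of t |-> zeta(t) on [0,oo) for the weak topology on finite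
    measures on \bar R_+^2 (initial topology of the maps
    mu |-> \int f dmu, f continuous (hence bounded) on the compact \bar R_+^2) *)
Definition weakly_continuous (zeta : R -> {finite_measure set (pt R) -> \bar R}) :=
  forall f : pt R -> R, {within Rp2, continuous f} ->
    {within `[0, +oo[, continuous (fun t => (\int[zeta t]_(p in Rp2) (f p)%:E)%E)}.

Definition fluid_data (lam : R) (theta : probability (pt R) R)
    (zeta0 : {finite_measure set (pt R) -> \bar R}) : Prop :=
  [/\ 0 < lam,
      theta (~` Rp2) = 0%E /\
      theta [set p | p.1 = 0%E /\ (0 <= p.2)%E] = 0%E /\
      theta [set p | (0 <= p.1)%E /\ p.2 = 0%E] = 0%E /\
      theta [set (+oo%E, +oo%E)] = 0%E,
      (1 < lam%:E * \int[theta]_(p in Rp2) p.1)%E,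
      zeta0 (~` Rp2) = 0%E &
      forall x : R, 0 <= x ->
        zeta0 [set p | p.1 = x%:E /\ (0 <= p.2)%E] = 0%E /\
        zeta0 [set p | (0 <= p.1)%E /\ p.2 = x%:E] = 0%E].

Definition fluid_solution (lam : R) (theta : probability (pt R) R)
    (zeta0 : {finite_measure set (pt R) -> \bar R})
    (zeta : R -> {finite_measure set (pt R) -> \bar R}) : Prop :=
  [/\ forall t : R, 0 <= t -> zeta t (~` Rp2) = 0%E,
      weakly_continuous zeta,
      forall a : R, 0 < a -> exists c : R, 0 < c /\ forall t : R, a < t -> c <= mass zeta t &
      forall C, corner_sets C -> forall t : R, 0 <= t ->
        zeta t C =
          (zeta0 (shift C (Sint (mass zeta) 0 t, t%:E)) +
           lam%:E * \int[lebesgue_measure]_(s in `[0%R, t]%classic)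
              theta (shift C (Sint (mass zeta) s t, (t - s)%:E)))%E].

End Defs.

(* Main.v *)
Require Import Defs.
From HB Require Import structures.
From mathcomp Require Import all_boot all_order all_algebra.
From mathcomp Require Import all_classical all_reals all_analysis.
From mathcomp Require Import measurable_realfun.
From mathcomp Require Import lra.
Import Order.TTheory GRing.Theory Num.Theory.
Import numFieldNormedType.Exports.
Local Open Scope classical_set_scope.
Local Open Scope ring_scope.

Section helpers.
Context {R : realType}.
Local Notation mu := (@lebesgue_measure R).

Lemma cc_shift (x y a : \bar R) (b : R) : (0 <= x)%E -> (0 <= y)%E -> (0 <= a)%E ->
  Defs.shift (closed_corner x y) (a, b%:E) = closed_corner (x + a)%E (y + b%:E)%E.
Proof.
move=> x0 y0 a0; apply/seteqP; split => [p [q [q1 q2] <-]|[p1 p2] [/= h1 h2]] /=.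
  by split; [exact: leeD2r|exact: leeD2r].
have q2 : (y <= p2 - b%:E)%E by rewrite leeBrDr.
have xNy : x != -oo%E by move: x0; case: (x).
case: a a0 h1 => [r| |] //= r0 h1.
  exists (p1 - r%:E, p2 - b%:E)%E; first by split; rewrite leeBrDr.
  by congr pair; rewrite subeK.
exists (x, p2 - b%:E)%E; first by split.
rewrite [X in (_, X)]subeK // [X in (X, _)]addey //; congr pair.
by move: h1; rewrite addey // leye_eq => /eqP.
Qed.

Lemma cc_measurable (x y : \bar R) : measurable (closed_corner x y).
Proof.
have -> : closed_corner x y = `[x, +oo[ `*` `[y, +oo[.
  by apply/seteqP; split => p /=; rewrite !in_itv /= !andbT.
by apply: measurableX; exact: emeasurable_itv.
Qed.


Lemma einv_ge0 (r : R) : 0 <= r -> (0 <= einv r)%E.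
Proof. by move=> r0; rewrite /einv; case: ifP => // _; rewrite lee_fin invr_ge0. Qed.

Lemma Sint_ge0 (f : R -> R) u v : (forall s, 0 <= f s) -> (0 <= Sint f u v)%E.
Proof. by move=> f0; apply: integral_ge0 => s _; exact: einv_ge0. Qed.

Definition shiftR (c : R) : measurableTypeR R -> measurableTypeR R := fun x => x + c.
Lemma measurable_shift (c : R) : measurable_fun setT (shiftR c).
Proof. exact: measurable_funD. Qed.

Lemma lebesgue_shift (c : R) (A : set R) : measurable A ->
  pushforward mu (shiftR c) A = mu A.
Proof.
move=> mA; apply/esym.
apply: (@lebesgue_measure_unique R (measure_function_pushforward__canonical__measure_function_Measure mu (measurable_shift c))) mA => _ [[a b]] _ <-.
rewrite /= /pushforward /=.
have -> : (shiftR c) @^-1` `]a, b] = `]a - c, b - c]%classic.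
  by apply/seteqP; split => x /=; rewrite !in_itv /= ltrBlDr lerBrDr.
rewrite !lebesgue_measure_itv /= !lte_fin ltrD2r.
by case: ifP => // _; rewrite -!EFinD; congr EFin; rewrite opprB addrA subrK.
Qed.


Lemma ge0_integral_shift (c : R) (D : set R) (f : R -> \bar R) :
  measurable D -> measurable_fun D f -> (forall x, D x -> (0 <= f x)%E) ->
  (\int[mu]_(x in D) f x = \int[mu]_(x in shiftR c @^-1` D) f (x + c)%R)%E.
Proof.
move=> mD mf f0.
rewrite -(ge0_integral_pushforward (measurable_shift c))//; last first.
  by move=> x; rewrite inE; exact: f0.
apply: eq_measure_integral => //= [_ A mA|A mA AS]; first exact: measurable_shift.
by move=> _; rewrite lebesgue_shift.
Qed.

Lemma ge0_integral_split (a b c : R) (f : R -> \bar R) : a <= b -> b <= c ->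
  measurable_fun `[a, c] f -> (forall x, `[a, c]%classic x -> (0 <= f x)%E) ->
  (\int[mu]_(x in `[a, c]) f x = \int[mu]_(x in `[a, b]) f x + \int[mu]_(x in `[b, c]) f x)%E.
Proof.
move=> ab bc mf f0.
have E : `[a, c]%classic = `[a, b]%classic `|` `]b, c]%classic :> set R.
  apply/seteqP; split => x /=; rewrite !in_itv /=.
    move=> /andP[ax xc]; case: (leP x b) => xb; [left|right]; apply/andP; split => //.
  case=> /andP[h1 h2]; apply/andP; split => //.
  - exact: le_trans bc.
  - by rewrite (le_trans ab) // ltW.
rewrite E ge0_integral_setU //; first last.
- by apply/disj_setPS => x [] /=; rewrite !in_itv /= => /andP[_ h] /andP[h' _]; move: (lt_le_trans h' h); rewrite ltxx.
- by move=> x Ex; apply: f0; rewrite E.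
- by rewrite -E.
rewrite integral_itv_obnd_cbnd //.
apply: measurable_funS mf => //; rewrite E; exact: subsetUr.
Qed.

End helpers.

Section sol.
Context {R : realType}.
Local Notation mu := (@lebesgue_measure R).
Variable zeta : R -> {finite_measure set (pt R) -> \bar R}.

Lemma mass_ge0 t : 0 <= mass zeta t.
Proof. by apply: fine_ge0; exact: measure_ge0. Qed.

Lemma massE t : (mass zeta t)%:E = zeta t (@Rp2 R).
Proof. by rewrite /mass fineK //; apply: fin_num_measure; exact: cc_measurable 0%E 0%E. Qed.

Lemma mass_cont : weakly_continuous zeta -> {in `]0, +oo[%classic, continuous (mass zeta)}.
Proof.
move=> wc.
have c1 : {within @Rp2 R, continuous (fun _ : pt R => (1:R))}.
  by apply: continuous_subspaceT => x; exact: cvg_cst.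
have := wc _ c1.
have -> : (fun t => \int[zeta t]_(p in (@Rp2 R)) ((fun _ : pt R => 1 : R) p)%:E)%E =
          (fun t => (mass zeta t)%:E).
  apply/funext => t; rewrite massE.
  by rewrite (integral_cst _ (cc_measurable 0%E 0%E)) mul1e.
have sub : `]0, +oo[%classic `<=` (`[0, +oo[%classic : set R).
  by move=> x /=; rewrite !in_itv /= !andbT; exact: ltW.
move=> /(continuous_subspaceW sub).
rewrite continuous_open_subspace; last exact: interval_open.
move=> h x xD; have := h x xD; move/fine_cvg => //.
Qed.


Lemma mass_pos lam theta zeta0 : fluid_solution lam theta zeta0 zeta ->
  forall t, 0 < t -> 0 < mass zeta t.
Proof.
case=> _ _ hp _ t t0.
have [c [c0 hc]] := hp (t / 2) (divr_gt0 t0 (ltr0Sn _ 1)).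
by apply: (lt_le_trans c0); apply: hc; lra.
Qed.

Lemma einv_mass_meas : {in `]0, +oo[%classic, continuous (mass zeta)} ->
  (forall t, 0 < t -> 0 < mass zeta t) ->
  measurable_fun (`[0, +oo[%classic : set R) (fun s => einv (mass zeta s)).
Proof.
move=> hc hp.
have E : `[0, +oo[%classic = [set 0] `|` `]0, +oo[%classic :> set R.
  apply/seteqP; split => x /=; rewrite !in_itv /= !andbT.
    by rewrite le_eqVlt => /predU1P[<-|]; [left|right].
  by case=> [->//|/ltW].
rewrite E; apply/measurable_funU => //; split; first exact: measurable_fun_set1.
apply: (@eq_measurable_fun _ _ _ _ _ (fun s => ((mass zeta s)^-1)%:E)).
  by move=> x; rewrite inE /= in_itv /= andbT => x0; rewrite /einv gt_eqF ?hp.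
apply/measurable_EFinP; apply: open_continuous_measurable_fun; first exact: interval_open.
move=> x xD; have x0 : 0 < x by move: xD; rewrite inE /= in_itv /= andbT.
by apply: cvgV; [rewrite gt_eqF ?hp|exact: hc].
Qed.


Lemma Sint_add : measurable_fun (`[0, +oo[%classic : set R) (fun s => einv (mass zeta s)) ->
  forall u v w, 0 <= u -> u <= v -> v <= w ->
  Sint (mass zeta) u w = (Sint (mass zeta) u v + Sint (mass zeta) v w)%E.
Proof.
move=> M u v w u0 uv vw; rewrite /Sint; apply: ge0_integral_split => //.
  apply: measurable_funS M => // x /=; rewrite !in_itv /= => /andP[ux _].
  by rewrite andbT (le_trans u0).
by move=> x _; exact/einv_ge0/mass_ge0.
Qed.

Lemma Sint_shift : measurable_fun (`[0, +oo[%classic : set R) (fun s => einv (mass zeta s)) ->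
  forall t0 u v, 0 <= t0 -> 0 <= u ->
  Sint (fun t => mass zeta (t0 + t)) u v = Sint (mass zeta) (t0 + u) (t0 + v).
Proof.
move=> M t0 u v t00 u0; rewrite /Sint.
rewrite [RHS](ge0_integral_shift t0) //; first last.
- by move=> x _; exact/einv_ge0/mass_ge0.
- apply: measurable_funS M => // x /=; rewrite !in_itv /= => /andP[ux _].
  by rewrite andbT; apply: le_trans ux; lra.
have -> : shiftR t0 @^-1` `[t0 + u, t0 + v]%classic = `[u, v]%classic.
  apply/seteqP; split => x /=; rewrite /shiftR !in_itv /= ![x + t0]addrC;
  by rewrite !lerD2l.
by apply: eq_integral => x _; rewrite addrC.
Qed.


Definition gfun (theta : probability (pt R) R) (T s : R) :=
  theta (closed_corner (Sint (mass zeta) s T) ((T - s)%:E)).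

Lemma g_mono theta : measurable_fun (`[0, +oo[%classic : set R) (fun s => einv (mass zeta s)) ->
  forall T s1 s2, 0 <= s1 -> s1 <= s2 -> s2 <= T -> (gfun theta T s1 <= gfun theta T s2)%E.
Proof.
move=> M T s1 s2 s10 s12 s2T.
apply: le_measure; rewrite ?inE; try exact: cc_measurable.
move=> [p1 p2] [/= h1 h2]; split => /=.
- apply: le_trans h1; rewrite (Sint_add M s1 s2 T s10 s12 s2T).
  by apply: leeDr; apply: Sint_ge0; exact: mass_ge0.
- by apply: le_trans h2; rewrite lee_fin; lra.
Qed.

Lemma g_meas theta : measurable_fun (`[0, +oo[%classic : set R) (fun s => einv (mass zeta s)) ->
  forall T, 0 <= T -> measurable_fun (`[0, T]%classic : set R) (gfun theta T).
Proof.
move=> M T T0.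
pose c s := if s <= 0 then 0 else if s <= T then s else T.
have c0 s : 0 <= c s by rewrite /c; case: ifPn => // /negP; case: ifPn => //; lra.
have cT s : c s <= T by rewrite /c; case: ifPn => // _; case: ifPn => //; lra.
have cnd s1 s2 : s1 <= s2 -> c s1 <= c s2.
  rewrite /c; case: (leP s1 0) => h1; case: (leP s2 0) => h2; try lra;
  case: (leP s1 T) => h3; case: (leP s2 T) => h4; lra.
pose h s := fine (gfun theta T (c s)).
have fing s : gfun theta T s \is a fin_num.
  by apply: fin_num_measure; exact: cc_measurable.
have hnd : nondecreasing_fun h.
  move=> s1 s2 s12; rewrite /h; apply: fine_le; rewrite ?inE ?fing //.
  by apply: g_mono => //; exact: cnd.
have mh := nondecreasing_measurable (measurable_itv `[0, T]) hnd.
apply: (@eq_measurable_fun _ _ _ _ _ (EFin \o h)); last exact/measurable_EFinP.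
move=> x; rewrite inE /= in_itv /= => /andP[x0 xT].
rewrite /h fineK // /c; case: ifPn => [xle0|_]; last by rewrite xT.
by have -> : x = 0 by apply/le_anti; rewrite xle0 x0.
Qed.

End sol.

Theorem mainTheorem4 (R : realType) (lam : R) (theta : probability (pt R) R)
    (zeta0 : {finite_measure set (pt R) -> \bar R})
    (zeta : R -> {finite_measure set (pt R) -> \bar R}) (t0 : R) :
  fluid_data lam theta zeta0 ->
  fluid_solution lam theta zeta0 zeta ->
  0 < t0 ->
  let z0 := fun t => mass zeta (t0 + t) in
  forall t, 0 <= t ->
    (z0 t)%:E =
      (zeta t0 (closed_corner (Sint z0 0 t) t%:E) +
       lam%:E * \int[lebesgue_measure]_(s in `[0%R, t]%classic)
          theta (closed_corner (Sint z0 s t) (t - s)%:E))%E.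
Proof.
move=> fd fs t0pos z0 t t_ge0.
have [H0 wc hp heq] := fs.
have M := @einv_mass_meas R zeta (@mass_cont R zeta wc) (@mass_pos R zeta _ _ _ fs).
have t00 : 0 <= t0 by exact: ltW.
have T0 : 0 <= t0 + t by lra.
have mge0 := @mass_ge0 R zeta.
have SZ s : 0 <= s -> Sint z0 s t = Sint (mass zeta) (t0 + s) (t0 + t).
  by move=> s0; rewrite /z0 (@Sint_shift R zeta M).
have -> : (z0 t)%:E = zeta (t0 + t) (closed_corner 0%E 0%E) by exact: massE.
rewrite heq //; last by right; exists 0%E, 0%E.
rewrite cc_shift ?add0e //; last exact: Sint_ge0.
have -> : (\int[lebesgue_measure]_(s in `[0%R, (t0 + t)%R])
      theta (Defs.shift (closed_corner 0%E 0%E)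
           (Sint (mass zeta) s (t0 + t), (t0 + t - s)%:E)) =
    \int[lebesgue_measure]_(s in `[0%R, (t0 + t)%R]) gfun zeta theta (t0 + t) s)%E.
  by apply: eq_integral => s _; rewrite cc_shift ?add0e //; exact: Sint_ge0.
rewrite heq //; last first.
  rewrite /corner_sets /=; right; exists (Sint z0 0 t), t%:E; split; [by apply: Sint_ge0 => s; exact: mge0|split => //].
rewrite cc_shift ?lee_fin //; try by apply: Sint_ge0 => s; exact: mge0.
rewrite SZ // addr0 [(Sint _ _ (t0 + t) + _)%E]addeC -(@Sint_add R zeta M) //; last lra.
rewrite -EFinD [t + t0]addrC.
have -> : (\int[lebesgue_measure]_(s in `[0%R, t0])
      theta (Defs.shift (closed_corner (Sint (mass zeta) t0 (t0 + t)) t%:E)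
           (Sint (mass zeta) s t0, (t0 - s)%:E)) =
    \int[lebesgue_measure]_(s in `[0%R, t0]) gfun zeta theta (t0 + t) s)%E.
  apply: eq_integral => s; rewrite inE /= in_itv /= => /andP[s0 st0].
  rewrite cc_shift ?lee_fin //; try by apply: Sint_ge0 => s'; exact: mge0.
  rewrite addeC -(@Sint_add R zeta M) //; last lra.
  by rewrite /gfun -EFinD; congr (theta (closed_corner _ _)); congr EFin; lra.
have -> : (\int[lebesgue_measure]_(s in `[0%R, t]) theta (closed_corner (Sint z0 s t) (t - s)%:E) =
    \int[lebesgue_measure]_(s in `[t0, (t0 + t)%R]) gfun zeta theta (t0 + t) s)%E.
  rewrite [RHS](ge0_integral_shift t0); first last.
  - by move=> x _; exact: measure_ge0.
  - apply: measurable_funS (@g_meas R zeta theta M _ T0) => // x /=; rewrite !in_itv /=.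
    by move=> /andP[h1 h2]; rewrite h2 andbT; lra.
  - by [].
  have -> : shiftR t0 @^-1` `[t0, t0 + t]%classic = `[0, t]%classic.
    apply/seteqP; split => x /=; rewrite /shiftR !in_itv /=; move=> /andP[h1 h2];
    apply/andP; split; lra.
  apply: eq_integral => s; rewrite inE /= in_itv /= => /andP[s0 st].
  rewrite SZ // /gfun [s + t0]addrC; congr (theta (closed_corner _ _)); congr EFin; lra.
rewrite (@ge0_integral_split R 0 t0 (t0 + t)) //; first last.
- exact: (@g_meas R zeta theta M).
- lra.
by rewrite ge0_muleDr ?addeA //; apply: integral_ge0 => x _; exact: measure_ge0.
Qed.
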